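(* Let $G$ be a non-complete finite simple graph of order $n$ with $\delta(G)\geq 1$. Then $\alpha^*(G)\leq \frac{2(n-1)}{\sigma_2(G)}$.
   Context: $\sigma_2(G)=\min\{d_G(u)+d_G(v): u\neq v,\ uv\notin E(G)\}$. An independent set $I$ of $G$ is light if $\sum_{u\in I}d_G(u)\le |V(G)|-1$; $\alpha^*(G)$ is the maximum size of a light independent set of $G$. *)

(* Defs.v *)
From mathcomp Require Import all_boot all_order all_algebra.
Set Implicit Arguments. Unset Strict Implicit. Unset Printing Implicit Defensive.

Definition simple_graph (T : finType) (e : rel T) : Prop :=
  symmetric e /\ irreflexive e.

Definition deg (T : finType) (e : rel T) (v : T) : nat := #|[set u | e v u]|.

Definition min_deg_ge1 (T : finType) (e : rel T) : Prop := forall v : T, 0 < deg e v.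

Definition complete (T : finType) (e : rel T) : Prop :=
  forall u v : T, u != v -> e u v.

(* sigma_2(G) = min { d(u)+d(v) : u <> v, uv not an edge }.
   The default value (used only for complete graphs) is irrelevant here. *)
Definition sigma2 (T : finType) (e : rel T) : nat :=
  \big[minn/(2 * #|T|)]_(p : T * T | (p.1 != p.2) && ~~ e p.1 p.2)
     (deg e p.1 + deg e p.2).

Definition independent (T : finType) (e : rel T) (I : {set T}) : bool :=
  [forall u in I, forall v in I, ~~ e u v].

Definition light (T : finType) (e : rel T) (I : {set T}) : bool :=
  independent e I && (\sum_(u in I) deg e u <= #|T|.-1)%N.

Definition alpha_star (T : finType) (e : rel T) : nat :=
  \max_(I : {set T} | light e I) #|I|.

(* Main.v *)
Require Import Defs.
From mathcomp Require Import all_boot all_order all_algebra.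
From mathcomp Require Import zify.
Import Order.TTheory GRing.Theory Num.Theory.
Local Open Scope ring_scope.

Lemma deg_lt (T : finType) (e : rel T) v : irreflexive e -> (deg e v <= #|T|.-1)%N.
Proof.
move=> irr; rewrite /deg -(cardsC1 v); apply: subset_leq_card.
apply/subsetP=> u; rewrite !inE; apply: contraTN => /eqP->; by rewrite irr.
Qed.

Lemma bigmin_le (I : finType) (P : pred I) (F : I -> nat) x j : P j ->
  (\big[minn/x]_(i | P i) F i <= F j)%N.
Proof.
move=> Pj.
have : j \in [seq i <- index_enum I | P i] by rewrite mem_filter Pj mem_index_enum.
rewrite -big_filter; elim: [seq i <- _ | _] => //= a s IH.
rewrite in_cons big_cons => /orP[/eqP->|/IH H]; first exact: geq_minl.
exact: leq_trans (geq_minr _ _) H.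
Qed.

Lemma sigma2_le (T : finType) (e : rel T) u v : u != v -> ~~ e u v ->
  (sigma2 e <= deg e u + deg e v)%N.
Proof.
move=> uv euv; by apply: (@bigmin_le _ _ (fun p : T * T => deg e p.1 + deg e p.2)%N _ (u, v)); rewrite /= uv.
Qed.

Lemma sigma2_gt0 (T : finType) (e : rel T) : min_deg_ge1 e -> #|T| != 0%N ->
  (0 < sigma2 e)%N.
Proof.
move=> md nT; rewrite /sigma2; apply: (big_ind (fun x => 0 < x)%N).
- by rewrite muln_gt0 /= lt0n.
- by move=> x y; rewrite leq_min => -> ->.
- by move=> p _; rewrite addn_gt0 md.
Qed.

Lemma light_bound (T : finType) (e : rel T) (I : {set T}) :
  simple_graph e -> ~ complete e -> light e I ->
  (#|I| * sigma2 e <= 2 * #|T|.-1)%N.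
Proof.
move=> [sym irr] nc /andP[ind hS].
have [u [v [uv euv]]] : exists u v, u != v /\ ~~ e u v.
  case: (pickP (fun p : T * T => (p.1 != p.2) && ~~ e p.1 p.2)) => [[u v] /andP[]|H].
    by move=> *; exists u, v.
  exfalso; apply: nc => u v uv.
  by move: (H (u, v)); rewrite /= uv /= => /negbFE.
case: (leqP #|I| 1) => hk.
  apply: (leq_trans (leq_mul hk (leqnn _))); rewrite mul1n.
  apply: (leq_trans (@sigma2_le _ e u v uv euv)).
  by rewrite mul2n -addnn leq_add ?deg_lt.
set S := (\sum_(u in I) deg e u)%N in hS.
suff H : (#|I| * sigma2 e <= 2 * S)%N by apply: leq_trans H _; rewrite leq_mul2l hS orbT.
have key : forall x, x \in I ->
   (2 * deg e x + (#|I|.-1) * sigma2 e <= #|I| * deg e x + S)%N.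
  move=> x xI.
  have -> : (#|I| * deg e x + S = \sum_(y in I) (deg e x + deg e y))%N.
    by rewrite big_split /= sum_nat_const mulnC.
  rewrite (bigD1 x) //= addnn -mul2n leq_add2l.
  apply: (@leq_trans (\sum_(i in I | i != x) sigma2 e)).
    rewrite sum_nat_const; apply: leq_mul => //.
    rewrite (cardD1 x I) xI /=; apply: eq_leq; apply: eq_card => i.
    by rewrite !inE andbC.
  apply: leq_sum => y /andP[yI yx].
  apply: (@sigma2_le _ e); first by rewrite eq_sym.
  by move/forall_inP: ind => /(_ x xI) /forall_inP /(_ y yI).
have := @leq_sum _ (index_enum T) (fun x => x \in I) _ _ key.
rewrite !big_split /= -!big_distrr /= !sum_nat_const -/S.
rewrite muln0 addn0.
move: hk; generalize #|I| (sigma2 e) S => k s0 S0 hk H.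
have [m km] : exists m, k = m.+2 by exists k.-2; lia.
subst k; rewrite /= in H.
rewrite leqNgt; apply/negP => h; have := leq_mul (leqnn m.+1) h. nia.
Qed.

Theorem proposition1p7 (T : finType) (e : rel T) :
  simple_graph e -> ~ complete e -> min_deg_ge1 e ->
  (alpha_star e)%:R <= (2 * (#|T| - 1)%N)%:R / (sigma2 e)%:R :> rat.
Proof.
move=> sg nc md.
have nT : #|T| != 0%N.
  apply/negP => /eqP/card0_eq T0; apply: nc => u; by move: (T0 u).
have s0 := @sigma2_gt0 _ e md nT.
have H : (alpha_star e * sigma2 e <= 2 * (#|T| - 1))%N.
  rewrite -leq_divRL //; apply/bigmax_leqP => I lI.
  by rewrite leq_divRL // subn1; exact: (@light_bound _ e).
by rewrite ler_pdivlMr ?ltr0n // -natrM ler_nat.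
Qed.
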